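(* Let $X$ be a separable topological space, let $T$ be a discrete space with Alexandroff compactification $Y=\alpha T=T\cup\{\infty\}$, and let $f:X\times Y\to\mathbb R$ be a separately continuous function. Then $(\wedge_f,\vee_f)$ is a stable pair of Hahn on $X$.
   Context: In $\alpha T$ the points of $T$ are isolated and neighbourhoods of $\infty$ are complements of finite subsets of $T$. $\wedge_f(x)=\inf_{y\in Y}f(x,y)$, $\vee_f(x)=\sup_{y\in Y}f(x,y)$. A pair $(g,h)$ of functions $X\to\overline{\mathbb R}$ is a stable pair of Hahn if there are continuous $u_n:X\to\overline{\mathbb R}$ with $g(x)=\min_{n\in\mathbb N}u_n(x)$ and $h(x)=\max_{n\in\mathbb N}u_n(x)$ for all $x\in X$ (attained). *)

(* Defs.v *)
From HB Require Import structures.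
From mathcomp Require Import all_boot all_order all_algebra.
From mathcomp Require Import all_classical all_reals all_analysis.
Set Implicit Arguments. Unset Strict Implicit. Unset Printing Implicit Defensive.
Import Order.TTheory GRing.Theory Num.Theory numFieldNormedType.Exports.
Local Open Scope classical_set_scope.
Local Open Scope ring_scope.

Definition separable_space (X : topologicalType) : Prop :=
  exists D : set X, countable D /\ dense D.

Definition separately_continuous (X Y : topologicalType) (R : realType)
    (f : X -> Y -> R) : Prop :=
  (forall x : X, continuous (f x)) /\ (forall y : Y, continuous (fun x => f x y)).

Definition wedge_f (X Y : Type) (R : realType) (f : X -> Y -> R) (x : X) : \bar R :=
  ereal_inf [set (f x y)%:E | y in [set: Y]].
Definition vee_f (X Y : Type) (R : realType) (f : X -> Y -> R) (x : X) : \bar R :=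
  ereal_sup [set (f x y)%:E | y in [set: Y]].

Definition stable_Hahn_pair (X : topologicalType) (R : realType)
    (g h : X -> \bar R) : Prop :=
  exists u : nat -> X -> \bar R,
    (forall n, continuous (u n)) /\
    (forall x, (exists n, u n x = g x) /\ (forall n, (g x <= u n x)%E)) /\
    (forall x, (exists n, u n x = h x) /\ (forall n, (u n x <= h x)%E)).

(* Main.v *)
Require Import Defs.
From HB Require Import structures.
From mathcomp Require Import all_boot all_order all_algebra.
From mathcomp Require Import all_classical all_reals all_analysis.
Import Order.TTheory GRing.Theory Num.Theory numFieldNormedType.Exports.
Local Open Scope classical_set_scope.
Local Open Scope ring_scope.

Lemma discrete_compact_finite (T : discreteTopologicalType) (K : set T) :
  compact K -> finite_set K.
Proof.
move=> /compact_near_coveringP cK.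
pose F : set_system (set T) :=
  fun Q => exists A : set T, finite_set A /\ forall B, finite_set B -> A `<=` B -> Q B.
have FF : Filter F.
  constructor.
  - by exists set0; split.
  - move=> P Q [A [fA HA]] [B [fB HB]]; exists (A `|` B); split; first by rewrite finite_setU.
    move=> C fC ABC; split; [apply: HA|apply: HB] => // x Hx; apply: ABC; by [left|right].
  - move=> P Q PQ [A [fA HA]]; exists A; split => // B fB AB; exact/PQ/HA.
have := cK (set T) F (fun i x => i x) FF.
case.
- move=> x Kx; exists ([set x], [set i : set T | i x]) => /=.
    split; first exact: discrete_set1.
    by exists [set x]; split => // B _; apply.
  by case=> y i /= [-> ?].
- move=> A [fA HA]; exact: (sub_finite_set (HA A fA (@subset_refl _ A)) fA).
Qed.

Lemma opc_finite (R : realType) (T : discreteTopologicalType)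
  (g : one_point_compactification T -> R) (eps : R) :
  0 < eps -> continuous g ->
  finite_set [set y | eps <= `|g y - g None|].
Proof.
move=> e0 cg.
have := cg None (ball (g None) eps) (nbhsx_ballx _ _ e0).
case=> K [cK clK] KU.
have fK := finite_image Some (@discrete_compact_finite T K cK).
apply: (sub_finite_set _ fK).
case=> [t|]; rewrite /= ?subrr ?normr0 => H.
- exists t => //; apply: contrapT => Kt.
  have := KU (Some t) (or_introl (ex_intro2 _ _ t Kt erefl)).
  rewrite /= /ball /= distrC; apply/negP; rewrite -leNgt //.
- by move: H; rewrite leNgt e0.
Qed.

Lemma small_inv (R : realType) (r : R) : 0 < r -> exists n : nat, n.+1%:R^-1 <= r.
Proof.
move=> r0; exists (Num.truncn r^-1).
rewrite -[leRHS]invrK lef_pV2 ?posrE ?invr_gt0 //; exact/ltW/truncnS_gt.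
Qed.

Theorem proposition3p3 (R : realType) (X : topologicalType)
    (T : discreteTopologicalType)
    (f : X -> one_point_compactification T -> R) :
  separable_space X ->
  separately_continuous f ->
  stable_Hahn_pair (wedge_f f) (vee_f f).
Proof.
move=> [D [cD dD]] [hx hy].
pose S := \bigcup_(d in D) \bigcup_(n in [set: nat])
   [set y | n.+1%:R^-1 <= `|f d y - f d None|].
have cS : countable S.
  apply: bigcup_countable => // d _; apply: bigcup_countable => // n _.
  by apply: finite_set_countable; apply: opc_finite => //.
have key : forall y, ~ S y -> forall x, f x y = f x None.
  move=> y nSy x; apply: contrapT => neq.
  have hd : forall d, D d -> f d y = f d None.
    move=> d Dd; apply: contrapT => ne; apply: nSy; exists d => //.
    have pos : 0 < `|f d y - f d None| by rewrite normr_gt0 subr_eq0; apply/eqP.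
    have [n hn] := small_inv _ _ pos.
    by exists n.
  pose h := fun x => f x y - f x None.
  have ch : continuous h by move=> z; apply: cvgB; [exact: hy | exact: hy].
  have oO : open (h @^-1` (~` [set 0])).
    apply: open_comp; first by move=> z _; exact: ch.
    exact/closed_openC/closed_eq.
  have [|z [Oz Dz]] := dD _ _ oO.
    by exists x => /= /eqP; rewrite /h subr_eq0 => /eqP.
  by apply: Oz; rewrite /h /= hd // subrr.
have [g ginj] := countable_injP _ cS.
pose e n := xget None [set y | S y /\ g y = n].
have eS : forall y, S y -> e (g y) = y.
  move=> y Sy; have [] := xgetPex None (P := [set z | S z /\ g z = g y]) (ex_intro _ y (conj Sy erefl)).
  by move=> Se ge; apply: ginj => //; rewrite inE.
pose v n := if n is m.+1 then e m else None.
have vall : forall x y, exists n, f x (v n) = f x y.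
  move=> x y; case: (pselect (S y)) => Sy.
    by exists (g y).+1; rewrite /= eS.
  by exists 0%N; rewrite /= key.
exists (fun n x => (f x (v n))%:E); split; [|split].
- move=> n x; apply: cvg_EFin; first exact: nearW.
  exact: hy.
- move=> x.
  have [c _ cmin] := compact_EVT_min (f := f x) (A := setT)
     (ex_intro _ None I) (@one_point_compactification_compact T)
     (continuous_subspaceT (hx x)).
  have wE : wedge_f f x = (f x c)%:E.
    apply/le_anti/andP; split.
      by apply: ereal_inf_lbound; exists c.
    by apply/ereal_infP => _ [y _ <-]; rewrite lee_fin; apply: cmin; rewrite in_setT.
  rewrite wE; split.
    by have [n hn] := vall x c; exists n; rewrite hn.
  by move=> n; rewrite lee_fin; apply: cmin; rewrite in_setT.
- move=> x.
  have [c _ cmax] := compact_EVT_max (f := f x) (A := setT)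
     (ex_intro _ None I) (@one_point_compactification_compact T)
     (continuous_subspaceT (hx x)).
  have wE : vee_f f x = (f x c)%:E.
    apply/le_anti/andP; split.
      by apply/ereal_supP => _ [y _ <-]; rewrite lee_fin; apply: cmax; rewrite in_setT.
    by apply: ereal_sup_ubound; exists c.
  rewrite wE; split.
    by have [n hn] := vall x c; exists n; rewrite hn.
  by move=> n; rewrite lee_fin; apply: cmax; rewrite in_setT.
Qed.
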